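(* Let $V$ be a finite ground set with $n=|V|$, let $f:2^V\to\mathbb{R}_{\ge 0}$ be monotone submodular, let $k\ge1$ and $t\ge 1$ be integers, and let $OPT=\max_{A\subseteq V,|A|\le k} f(A)$. For $1\le\ell\le t$ let $\alpha_\ell=\left(1-\frac{1}{t+1}\right)^\ell\frac{OPT}{k}$. Run the following randomized procedure (Algorithm 2): set $G=\emptyset$; for $\ell=1,\dots,t$: (i) draw a fresh random set $S\subseteq V$ containing each element independently with probability $p=4\sqrt{k/n}$, and partition $V$ at random into sets $V_1,\dots,V_m$; (ii) compute $G_0=\textsc{ThresholdGreedy}(S,G,\alpha_\ell)$; (iii) for each $i$, set $R_i=\textsc{ThresholdFilter}(V_i,G_0,\alpha_\ell)$ if $|G_0|<k$ and $R_i=\emptyset$ otherwise; (iv) set $G=\textsc{ThresholdGreedy}\big(\bigcup_i R_i,\,G_0,\,\alpha_\ell\big)$. Output $G$. Then the approximation ratio of this algorithm is at least $1-\left(1-\frac{1}{t+1}\right)^t$; namely, for every outcome of the random choices, $f(G)\ge\left(1-\left(1-\frac{1}{t+1}\right)^t\right)OPT$.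
   Context: A function $f:2^V\to\mathbb{R}_{\ge0}$ is submodular if $f(A\cup\{e\})-f(A)\ge f(B\cup\{e\})-f(B)$ for all $A\subseteq B\subseteq V$ and $e\notin B$, and monotone if $f(A\cup\{e\})-f(A)\ge 0$ for all $A$ and $e\notin A$. For $A\subseteq V$, $e\in V$ write $f_A(e)=f(A\cup\{e\})-f(A)$. Fix a total order on $V$; all sets are scanned in this order. $\textsc{ThresholdGreedy}(T,G,\tau)$ (for $|G|\le k$): start with $G'=G$; scan $e\in T$ in the fixed order, and whenever $f_{G'}(e)\ge\tau$ and $|G'|<k$, add $e$ to $G'$; return $G'$. $\textsc{ThresholdFilter}(T,G,\tau)$ returns $\{e\in T: f_G(e)\ge\tau\}$. Here $m$ is the number of machines (the paper takes $m=\sqrt{n/k}$). *)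

(* Defs.v *)
From mathcomp Require Import all_boot all_order all_algebra.
Set Implicit Arguments. Unset Strict Implicit. Unset Printing Implicit Defensive.
Import Order.TTheory GRing.Theory Num.Theory.
Local Open Scope ring_scope.

Section Defs.
Variables (R : realFieldType) (V : finType).
Implicit Types (f : {set V} -> R) (A B G : {set V}).

Definition marg f A (e : V) : R := f (e |: A) - f A.

Definition nonneg_fun f := forall A, 0 <= f A.
Definition monotone f := forall A (e : V), e \notin A -> 0 <= marg f A e.
Definition submodular f :=
  forall A B (e : V), A \subset B -> e \notin B -> marg f B e <= marg f A e.

(* OPT = max_{|A| <= k} f A  (f is nonnegative, so the seed 0 is harmless) *)
Definition OPT f (k : nat) : R := \big[Num.max/0]_(A : {set V} | (#|A| <= k)%N) f A.

(* [sigma] is the fixed total order on V: a duplicate-free enumeration of V.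
   A set T is scanned as the subsequence of sigma of elements of T. *)
Definition scan (sigma : seq V) (T : {set V}) : seq V := [seq e <- sigma | e \in T].

Definition ThresholdGreedy f (k : nat) (sigma : seq V) (T G : {set V}) (tau : R)
  : {set V} :=
  foldl (fun G' e => if (tau <= marg f G' e) && (#|G'| < k)%N then e |: G' else G')
        G (scan sigma T).

Definition ThresholdFilter f (T G : {set V}) (tau : R) : {set V} :=
  [set e in T | tau <= marg f G e].

Definition alpha f (k t l : nat) : R :=
  (1 - (t.+1%:R)^-1) ^+ l * OPT f k / k%:R.

Definition round f (k t : nat) (sigma : seq V) (m : nat) (l : nat)
  (S : {set V}) (part : V -> 'I_m) (G : {set V}) : {set V} :=
  let a := alpha f k t l in
  let G0 := ThresholdGreedy f k sigma S G a in
  let Rs := fun i : 'I_m =>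
    if (#|G0| < k)%N then ThresholdFilter f [set v | part v == i] G0 a else set0 in
  ThresholdGreedy f k sigma (\bigcup_(i < m) Rs i) G0 a.

(* Run rounds 1..l; S l and part l are the random outcomes of round l. *)
Fixpoint algo2 f (k t : nat) (sigma : seq V) (m : nat)
  (S : nat -> {set V}) (part : nat -> V -> 'I_m) (l : nat) : {set V} :=
  match l with
  | 0 => set0
  | l'.+1 => round f k t sigma l'.+1 (S l'.+1) (part l'.+1)
               (algo2 f k t sigma S part l')
  end.

End Defs.

(* Main.v *)
Require Import Defs.
From mathcomp Require Import all_boot all_order all_algebra.
From mathcomp Require Import lra zify ring.
Set Implicit Arguments. Unset Strict Implicit.
Import Order.TTheory GRing.Theory Num.Theory.
Local Open Scope ring_scope.

Definition tgstep (R : realFieldType) (V : finType) (f : {set V} -> R) (k : nat) (tau : R) :=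
  fun G' e => if (tau <= marg f G' e) && (#|G'| < k)%N then e |: G' else G'.

Lemma TG_fold (R : realFieldType) (V : finType) (f : {set V} -> R) k sigma T G tau :
  ThresholdGreedy f k sigma T G tau = foldl (tgstep f k tau) G (scan sigma T).
Proof. by []. Qed.

Lemma fold_sub (R : realFieldType) (V : finType) (f : {set V} -> R) k tau (s : seq V) (G : {set V}) :
  G \subset foldl (tgstep f k tau) G s.
Proof.
elim: s G => [|e s IH] G /=; first exact: subxx.
apply: subset_trans (IH _); rewrite /tgstep; case: ifP => _ //; exact: subsetUr.
Qed.

Lemma fold_card (R : realFieldType) (V : finType) (f : {set V} -> R) k tau (s : seq V) (G : {set V}) :
  (#|G| <= k)%N -> (#|foldl (tgstep f k tau) G s| <= k)%N.
Proof.
elim: s G => [|e s IH] G //= HG; apply: IH; rewrite /tgstep.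
case: ifP => // /andP[_ H]; rewrite cardsU1; case: (e \in G) => /=; lia.
Qed.

Lemma fold_pot (R : realFieldType) (V : finType) (f : {set V} -> R) k tau (s : seq V) (G : {set V}) :
  f G - #|G|%:R * tau <= f (foldl (tgstep f k tau) G s) - #|foldl (tgstep f k tau) G s|%:R * tau.
Proof.
elim: s G => [|e s IH] G //=; apply: le_trans (IH _); rewrite /tgstep.
case: ifP => // /andP[Ht _].
case eG: (e \in G); first by rewrite (setUidPr _) // sub1set.
rewrite cardsU1 eG /= natrD.
move: Ht; rewrite /marg => Ht; lra.
Qed.

Lemma fold_small (R : realFieldType) (V : finType) (f : {set V} -> R) k tau (s : seq V) (G : {set V}) :
  submodular f ->
  (#|foldl (tgstep f k tau) G s| < k)%N ->
  forall e, e \in s -> e \in foldl (tgstep f k tau) G s \/ marg f (foldl (tgstep f k tau) G s) e < tau.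
Proof.
move=> hsub; elim: s G => [|x s IH] G //= Hc e; rewrite inE => /orP[/eqP -> | Hs]; last exact: IH.
set G1 := tgstep f k tau G x.
have sG1 : G1 \subset foldl (tgstep f k tau) G1 s by exact: fold_sub.
case xF: (x \in foldl (tgstep f k tau) G1 s); first by left.
right.
have sGG1 : G \subset G1 by rewrite /G1 /tgstep; case: ifP => // _; exact: subsetUr.
have cG : (#|G| < k)%N.
  apply: leq_ltn_trans Hc; apply: subset_leq_card; exact: subset_trans sGG1 sG1.
have hx : marg f G x < tau.
  move: sG1 xF; rewrite /G1 /tgstep cG andbT.
  case: ifP; last by move/negbT; rewrite -ltNge.
  move=> _ /subsetP /(_ x); rewrite setU11 => -> //.
apply: le_lt_trans hx; apply: hsub; first exact: subset_trans sGG1 sG1.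
by rewrite xF.
Qed.

Lemma f_mono (R : realFieldType) (V : finType) (f : {set V} -> R) (X Y : {set V}) :
  monotone f -> X \subset Y -> f X <= f Y.
Proof.
move=> hm; move Hn: #|Y :\: X| => n; elim: n Y Hn => [|n IH] Y Hn sXY.
  have : Y :\: X = set0 by apply/eqP; rewrite -cards_eq0 Hn.
  move/eqP; rewrite setD_eq0 => sYX.
  by rewrite (_ : X = Y) //; apply/eqP; rewrite eqEsubset sXY sYX.
have : (0 < #|Y :\: X|)%N by rewrite Hn.
case/card_gt0P => e he; move: (he); rewrite inE => /andP[eX eY].
have sXY' : X \subset Y :\ e.
  apply/subsetP => x xX; rewrite !inE (subsetP sXY) // andbT.
  by apply/eqP => exe; move: eX; rewrite -exe xX.
have cn : #|(Y :\ e) :\: X| = n.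
  have -> : (Y :\ e) :\: X = (Y :\: X) :\ e by rewrite !setDDl setUC.
  by rewrite (cardsD1 e (Y :\: X)) he in Hn; case: Hn.
apply: le_trans (IH _ cn sXY') _.
rewrite -{2}(setD1K eY).
have := hm (Y :\ e) e; rewrite /marg setD11 => /(_ isT); lra.
Qed.

Lemma gap_bound (R : realFieldType) (V : finType) (f : {set V} -> R) (G : {set V}) (a : R) :
  monotone f -> submodular f -> 0 <= a -> (forall e, marg f G e <= a) ->
  forall A, f A <= f G + #|A|%:R * a.
Proof.
move=> hm hs ha hG A.
suff H : forall n (A : {set V}), #|A| = n -> f (G :|: A) <= f G + n%:R * a.
  apply: le_trans (H _ A erefl); apply: f_mono => //; exact: subsetUr.
elim => [|n IH] B HB.
  move/eqP: HB; rewrite cards_eq0 => /eqP ->; rewrite setU0; lra.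
have : (0 < #|B|)%N by rewrite HB.
case/card_gt0P => e eB.
have cB : #|B :\ e| = n by move: HB; rewrite (cardsD1 e B) eB; case.
rewrite -(setD1K eB) setUCA.
have h1 := IH _ cB.
have h2 : marg f (G :|: B :\ e) e <= a.
  case eG: (e \in G :|: B :\ e).
    by rewrite /marg (setUidPr _) ?sub1set // subrr.
  apply: le_trans (hG e); apply: hs; first exact: subsetUl.
  by rewrite eG.
move: h2; rewrite /marg -addn1 natrD => h2; lra.
Qed.

Lemma OPT_ge0 (R : realFieldType) (V : finType) (f : {set V} -> R) k : 0 <= OPT f k.
Proof.
rewrite /OPT; elim/big_rec: _ => // i x _ hx; rewrite le_max hx orbT //.
Qed.

Lemma OPT_le (R : realFieldType) (V : finType) (f : {set V} -> R) k (B : R) :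
  0 <= B -> (forall A : {set V}, (#|A| <= k)%N -> f A <= B) -> OPT f k <= B.
Proof.
move=> h0 hA; rewrite /OPT; elim/big_rec: _ => // i x hi hx; rewrite ge_max hx andbT; exact: hA.
Qed.

Lemma round_sub (R : realFieldType) (V : finType) (f : {set V} -> R) k t sigma m l S
  (part : V -> 'I_m) (G : {set V}) : G \subset round f k t sigma l S part G.
Proof.
rewrite /round !TG_fold; apply: subset_trans (fold_sub _ _ _ _ _) _; exact: fold_sub.
Qed.

Lemma round_card (R : realFieldType) (V : finType) (f : {set V} -> R) k t sigma m l S
  (part : V -> 'I_m) (G : {set V}) : (#|G| <= k)%N -> (#|round f k t sigma l S part G| <= k)%N.
Proof. by move=> h; rewrite /round !TG_fold; do 2 apply: fold_card. Qed.

Lemma round_pot (R : realFieldType) (V : finType) (f : {set V} -> R) k t sigma m l S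
  (part : V -> 'I_m) (G : {set V}) :
  f G - #|G|%:R * alpha f k t l <=
  f (round f k t sigma l S part G) - #|round f k t sigma l S part G|%:R * alpha f k t l.
Proof. rewrite /round !TG_fold; apply: (le_trans (fold_pot f k _ _ G)); exact: fold_pot. Qed.

Lemma round_small (R : realFieldType) (V : finType) (f : {set V} -> R) k t sigma m l S
  (part : V -> 'I_m) (G : {set V}) :
  submodular f -> (forall v, v \in sigma) -> 0 <= alpha f k t l ->
  (#|round f k t sigma l S part G| < k)%N ->
  forall e, marg f (round f k t sigma l S part G) e <= alpha f k t l.
Proof.
move=> hs hsig ha; rewrite /round !TG_fold.
set a := alpha f k t l.
set G0 := foldl _ G _.
set U := \bigcup_(i < m) _.
set G1 := foldl _ G0 _.
move=> hc e.
have sG01 : G0 \subset G1 by exact: fold_sub.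
have c0 : (#|G0| < k)%N by apply: leq_ltn_trans hc; exact: subset_leq_card.
have inG : e \in G1 -> marg f G1 e <= a.
  by move=> eG; rewrite /marg (setUidPr _) ?sub1set // subrr.
case eU: (e \in U).
  have es : e \in scan sigma U by rewrite /scan mem_filter eU hsig.
  case: (fold_small hs hc es) => [/inG //| /ltW //].
case eG1: (e \in G1); first exact: inG.
have h0 : marg f G0 e < a.
  rewrite ltNge; apply/negP => hle; move/negbT: eU; apply/negP; rewrite negbK.
  apply/bigcupP; exists (part e) => //; rewrite c0 inE inE hle andbT; exact: eqxx.
apply: ltW; apply: le_lt_trans h0; apply: hs => //; by rewrite eG1.
Qed.

Lemma alg_step (R : realFieldType) (T K L b O x x' F F' : R) :
  0 < T -> 0 < K -> 0 <= b -> 0 <= O -> L + 1 <= T ->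
  F' - x' * (b * (1 - (T + 1)^-1) * O / K) <= F - x * (b * (1 - (T + 1)^-1) * O / K) ->
  (1 - b) * O + (x' / K - L / T) * b * O <= F' ->
  (x' < K -> (1 - b) * O <= F') ->
  (1 - b * (1 - (T + 1)^-1)) * O + (x / K - (L + 1) / T) * (b * (1 - (T + 1)^-1)) * O <= F.
Proof.
move=> hT hK hb hO hL hpot hI hJ.
have hT1 : T + 1 != 0 by rewrite lt0r_neq0 // ltr_wpDr.
have hT0 : T != 0 by rewrite lt0r_neq0.
have hK0 : K != 0 by rewrite lt0r_neq0.
have hw : 0 <= (T + 1)^-1 by rewrite invr_ge0 ltW // ltr_wpDr.
have hbO : 0 <= b * O * (T + 1)^-1 by rewrite !mulr_ge0.
case: (lerP (L / T) (x' / K)) => hc.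
  have E : (1 - b) * O + (x' / K - L / T) * b * O + (x - x') * (b * (1 - (T + 1)^-1) * O / K)
     - ((1 - b * (1 - (T + 1)^-1)) * O + (x / K - (L + 1) / T) * (b * (1 - (T + 1)^-1)) * O)
     = b * O * (T + 1)^-1 * (x' / K - L / T).
  by field; rewrite ?hT1 ?hT0 ?hK0.
  have : 0 <= b * O * (T + 1)^-1 * (x' / K - L / T) by rewrite mulr_ge0 // subr_ge0.
  rewrite -E; move: hpot hI; lra.
have hx : x' < K.
  have : x' / K < 1.
    apply: lt_le_trans hc _; rewrite ler_pdivrMr // mul1r; lra.
  by rewrite ltr_pdivrMr // mul1r.
have hJ' := hJ hx.
have E : (1 - b) * O + (x - x') * (b * (1 - (T + 1)^-1) * O / K)
     - ((1 - b * (1 - (T + 1)^-1)) * O + (x / K - (L + 1) / T) * (b * (1 - (T + 1)^-1)) * O)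
     = b * O * (T + 1)^-1 * T * (L / T - x' / K).
  by field; rewrite ?hT1 ?hT0 ?hK0.
have : 0 <= b * O * (T + 1)^-1 * T * (L / T - x' / K).
  apply: mulr_ge0; first by apply: mulr_ge0 => //; exact: ltW.
  by rewrite subr_ge0 ltW.
rewrite -E; move: hpot hJ'; lra.
Qed.

Theorem lemma3 (R : realFieldType) (V : finType) (f : {set V} -> R)
  (k t : nat) (sigma : seq V) (m : nat)
  (S : nat -> {set V}) (part : nat -> V -> 'I_m) :
  nonneg_fun f -> monotone f -> submodular f ->
  (1 <= k)%N -> (1 <= t)%N ->
  uniq sigma -> (forall v : V, v \in sigma) ->
  (1 - (1 - (t.+1%:R)^-1) ^+ t) * OPT f k <= f (algo2 f k t sigma S part t).
Proof.
move=> hnn hm hs hk ht _ hsig.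
have hO := OPT_ge0 f k.
have hK : 0 < k%:R :> R by rewrite ltr0n.
have hT : 0 < t%:R :> R by rewrite ltr0n.
have hbeta : 0 <= 1 - (t.+1%:R)^-1 :> R.
  rewrite subr_ge0 invf_le1 ?ltr0n // ler1n //.
have hal : forall l, 0 <= alpha f k t l.
  move=> l; rewrite /alpha; apply: mulr_ge0; last by rewrite invr_ge0 ltW.
  by apply: mulr_ge0 => //; apply: exprn_ge0.
set b := 1 - (t.+1%:R)^-1 : R.
set O := OPT f k.
pose G l := algo2 f k t sigma S part l.
suff H : forall l, (l <= t)%N ->
  [/\ (#|G l| <= k)%N,
      (1 - b ^+ l) * O + (#|G l|%:R / k%:R - l%:R / t%:R) * b ^+ l * O <= f (G l) &
      ((#|G l| < k)%N -> (1 - b ^+ l) * O <= f (G l))].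
  have [hc hI hJ] := H t (leqnn t).
  case: (ltngtP #|G t| k) => hh; first exact: hJ.
    by move: hc; rewrite leqNgt hh.
  move: hI; rewrite hh divff ?lt0r_neq0 // divff ?lt0r_neq0 // subrr !mul0r addr0.
  by rewrite -/O.
elim => [|l IH] hl.
  rewrite /G /= cards0 expr0 subrr !mul0r subrr !mul0r add0r; split => //; exact: hnn.
have [hc hI hJ] := IH (ltnW hl).
have hGS : G l.+1 = round f k t sigma l.+1 (S l.+1) (part l.+1) (G l) by [].
have hal' : alpha f k t l.+1 = b ^+ l * (1 - (t%:R + 1)^-1) * O / k%:R.
  by rewrite /alpha natr1 -/b -/O exprSr.
have hJ' : (#|G l.+1| < k)%N -> (1 - b ^+ l.+1) * O <= f (G l.+1).
  move=> hlt.
  rewrite hGS in hlt; have hmg := round_small hs hsig (hal l.+1) hlt.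
  rewrite -hGS in hmg.
  have hgap := gap_bound hm hs (hal l.+1) hmg.
  have hB : O <= f (G l.+1) + k%:R * alpha f k t l.+1.
    apply: OPT_le.
      by apply: addr_ge0; [exact: hnn | apply: mulr_ge0; [exact: ltW | exact: hal]].
    move=> A hA; apply: le_trans (hgap A) _; rewrite lerD2l; apply: ler_wpM2r; first exact: hal.
    by rewrite ler_nat.
  have E : k%:R * alpha f k t l.+1 = b ^+ l.+1 * O.
    by rewrite /alpha -/b -/O; field; rewrite lt0r_neq0.
  rewrite E in hB; rewrite mulrBl mul1r; lra.
split => //.
- by rewrite hGS; apply: round_card.
- have hpot := round_pot f k t sigma l.+1 (S l.+1) (part l.+1) (G l).
  rewrite -hGS hal' in hpot.
  have := @alg_step R t%:R k%:R l%:R (b ^+ l) O #|G l.+1|%:R #|G l|%:R (f (G l.+1)) (f (G l))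
    hT hK (exprn_ge0 _ hbeta) hO _ hpot hI.
  have hL : l%:R + 1 <= t%:R :> R by rewrite natr1 ler_nat.
  move=> /(_ hL).
  have hJx : (#|G l|%:R < k%:R :> R) -> (1 - b ^+ l) * O <= f (G l).
    by move=> h; apply: hJ; rewrite -(ltr_nat R).
  move=> /(_ hJx).
  by rewrite !natr1 -/b -exprSr.
Qed.
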